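(* Let $m$ be a positive integer with $\omega(m)\ge 2$. Then the $n$-ary functions $\mathrm{AND}_n$ can be realized by probabilistic $\mathrm{CC}^2[m]$-circuits of size polynomial in $n$ using $O(\log n)$ random bits. In fact, for two different primes $p,q$, this realization can be done by $\mathrm{CC}[p;q]$-circuits.
   Context: For an integer $m\ge 1$ and $A\subseteq\{0,\dots,m-1\}$, a gate $\mathrm{MOD}_m^A$ takes finitely many Boolean inputs (counted with multiplicity) and outputs $1$ if their sum modulo $m$ lies in $A$, and $0$ otherwise. A $\mathrm{CC}^h[m]$-circuit is a depth-$h$ Boolean circuit all of whose gates are of the form $\mathrm{MOD}_m^A$ ($A$ may vary between gates), multiple wires allowed. A $\mathrm{CC}[p;q]$-circuit is a depth-2 circuit whose gates on the first level (fed by the inputs) are of the form $\mathrm{MOD}_p^A$ and whose output gate on the second level is of the form $\mathrm{MOD}_q^A$. The size of a circuit is its number of gates. $\omega(m)$ is the number of distinct prime divisors of $m$. A probabilistic circuit realizing an $n$-ary Boolean function $f$ with $r$ random bits is a circuit $\Gamma$ with $n+r$ inputs such that for every $\bar a\in\{0,1\}^n$, for at least $\frac23$ of the tuples $\bar b\in\{0,1\}^r$ we have $\Gamma(\bar a,\bar b)=f(\bar a)$. *)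

(* Defs.v *)
From mathcomp Require Import all_boot.
Set Implicit Arguments. Unset Strict Implicit. Unset Printing Implicit Defensive.

(* MOD_m^A gate applied to a total (multiplicity-weighted) input sum k. *)
Definition mod_gate (m : nat) (A : {set 'I_m}) (k : nat) : bool :=
  [exists i in A, nat_of_ord i == k %% m].

(* Layered depth-2 circuit with N inputs: s first-level MOD_p gates fed by
   the inputs (wire multiplicities w1), and one output MOD_q gate fed by the
   first-level gates (multiplicities w2).  CC[p;q] circuits; with p = q = m
   this is a (layered) CC^2[m] circuit. *)
Record CC2 (p q N : nat) := MkCC2 {
  cc_s  : nat;
  cc_w1 : 'I_cc_s -> 'I_N -> nat;
  cc_A1 : 'I_cc_s -> {set 'I_p};
  cc_w2 : 'I_cc_s -> nat;
  cc_A2 : {set 'I_q} }.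
Arguments cc_s {p q N}.
Arguments cc_w1 {p q N}.
Arguments cc_A1 {p q N}.
Arguments cc_w2 {p q N}.
Arguments cc_A2 {p q N}.

Definition cc_size p q N (G : CC2 p q N) : nat := (cc_s G).+1.

Definition cc_eval p q N (G : CC2 p q N) (x : 'I_N -> bool) : bool :=
  mod_gate (cc_A2 G)
    (\sum_(j < cc_s G)
        cc_w2 G j * mod_gate (cc_A1 G j) (\sum_(i < N) cc_w1 G j i * x i)).

Definition join_inputs n r (a : {ffun 'I_n -> bool}) (b : {ffun 'I_r -> bool})
  : 'I_(n + r) -> bool :=
  fun i => match split i with inl j => a j | inr j => b j end.

Definition AND_n n (a : {ffun 'I_n -> bool}) : bool := [forall i, a i].

Definition prob_realizes p q n r (G : CC2 p q (n + r))
    (f : {ffun 'I_n -> bool} -> bool) : Prop :=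
  forall a : {ffun 'I_n -> bool},
    2 * 2 ^ r <= 3 * #|[set b : {ffun 'I_r -> bool} |
                          cc_eval G (join_inputs a b) == f a]|.

Definition AND_poly_logrand (p q : nat) : Prop :=
  exists C k : nat, forall n : nat,
    exists (r : nat) (G : CC2 p q (n + r)),
      [/\ cc_size G <= C * n.+1 ^ k,
          r <= C * (trunc_log 2 n).+1
        & prob_realizes G (@AND_n n)].

(* Main.v *)
Require Import Defs.
From mathcomp Require Import all_boot all_order all_algebra all_field.
From mathcomp Require Import ring zify.
Set Implicit Arguments. Unset Strict Implicit. Unset Printing Implicit Defensive.
Import GRing.Theory.
Import VectorInternalTheory.

Section Gadget.
Variables (p q : nat) (pr_p : prime p) (pr_q : prime q).
Local Open Scope ring_scope.

Lemma affine_gate (N : nat) (X : 'I_N -> bool) (a : 'I_N -> 'F_p) (C : 'F_p) :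
  mod_gate [set i : 'I_p | (i : nat)%:R == C] (\sum_i (a i : nat) * X i)%N
  = ((\sum_i a i * (X i)%:R) == C).
Proof.
have -> : \sum_i a i * (X i)%:R = (\sum_i (a i : nat) * X i)%N%:R.
  by rewrite natr_sum; apply: eq_bigr => i _; rewrite natrM natr_Zp.
set k := (\sum_i _)%N.
have p0 : (0 < p)%N := prime_gt0 pr_p.
apply/existsP/idP.
  case=> i /andP[]; rewrite inE => /eqP <- /eqP ->.
  by rewrite (Fp_nat_mod pr_p).
move=> /eqP kC; exists (Ordinal (ltn_pmod k p0)); rewrite inE /= eqxx andbT.
by rewrite (Fp_nat_mod pr_p) kC.
Qed.

Lemma gadget (K : nat) (z : 'I_K -> 'F_p) :
  let S (t : {ffun 'I_K -> 'F_p}) := \sum_k t k * z k in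
  let G := (\sum_(t : {ffun 'I_K -> 'F_p}) ((S t == 0%R) + q.-1 * (S t == 1%R)))%N in
  if [forall k, z k == 0] then G = (p ^ K)%N else (G %% q = 0)%N.
Proof.
move=> S G; case: ifP => [/forallP z0 | /negbT].
  have S0 t : S t = 0 by rewrite /S big1 // => k _; rewrite (eqP (z0 k)) mulr0.
  rewrite /G (eq_bigr (fun _ => 1%N)); last first.
    by move=> t _; rewrite S0 eqxx eq_sym oner_eq0 muln0 addn0.
  by rewrite sum1_card card_ffun card_Fp // card_ord.
rewrite negb_forall => /existsP[k0 zk0].
pose u := (z k0)^-1.
pose phi (t : {ffun 'I_K -> 'F_p}) := [ffun k => t k + (k == k0)%:R * u].
have Sphi t : S (phi t) = S t + 1.
  rewrite /S (eq_bigr (fun k => t k * z k + (k == k0)%:R * u * z k)); last first.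
    by move=> k _; rewrite ffunE mulrDl.
  rewrite big_split /=; congr (_ + _).
  rewrite (bigD1 k0) //= eqxx mul1r mulVf // big1 ?addr0 // => k /negbTE ->.
  by rewrite !mul0r.
have phi_inj : injective phi.
  move=> t1 t2 /ffunP e; apply/ffunP => k; move: (e k); rewrite !ffunE.
  by apply: addIr.
have N10 : (\sum_t (S t == 1%R) = \sum_t (S t == 0%R))%N.
  rewrite (reindex_inj phi_inj) /=; apply: eq_bigr => t _.
  by rewrite Sphi -{2}(add0r 1) (inj_eq (addIr 1)).
rewrite /G big_split /= -big_distrr /= N10.
have -> : (\sum_t (S t == 0%R) + q.-1 * \sum_t (S t == 0%R) = q * \sum_t (S t == 0%R))%N.
  by rewrite -{1}(mul1n (\sum_t _)) -mulnDl add1n prednK // prime_gt0.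
by rewrite modnMr.
Qed.
End Gadget.

Lemma split_l m n (i : 'I_m) : split (lshift n i) = inl i.
Proof. exact: (unsplitK (inl i)). Qed.
Lemma split_r m n (i : 'I_n) : split (rshift m i) = inr i.
Proof. exact: (unsplitK (inr i)). Qed.

Lemma sum_enum_val (T : finType) (f : T -> nat) :
  (\sum_(j < #|{: T}|) f (enum_val j) = \sum_g f g)%N.
Proof. by rewrite -big_enum_val. Qed.

Lemma sum_pair (A B : finType) (h : A * B -> nat) :
  (\sum_g h g = \sum_a \sum_b h (a, b))%N.
Proof. by rewrite pair_big; apply: eq_bigr => -[]. Qed.

Section Construction.
Local Open Scope ring_scope.
Variables (p q : nat) (pr_p : prime p) (pr_q : prime q) (pq : p != q).
Variables (n r : nat) (F0 : finFieldType) (pcharF : (p \in [pchar F0])%N).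
Local Notation F := (pPrimeCharType pcharF).
Variable alpha : {ffun 'I_r -> bool} -> F.
Hypothesis alpha_inj : injective alpha.
Local Notation D := (dim F).
Local Notation K := (D + r)%N.
Local Open Scope ring_scope.

Local Notation Tg := ({ffun 'I_r -> bool} * ({ffun 'I_K -> 'F_p} * bool))%type.

Definition ecoef (rho : {ffun 'I_r -> bool}) (t : {ffun 'I_K -> 'F_p}) (i : 'I_n) : 'F_p :=
  \sum_(k < D) t (lshift r k) * v2r (alpha rho ^+ i) ord0 k.
Definition coefj rho t (j : 'I_(n + r)) : 'F_p :=
  match split j with inl i => - ecoef rho t i | inr k => t (rshift D k) end.
Definition cst rho t : 'F_p :=
  \sum_(i < n) ecoef rho t i - \sum_(k < r) t (rshift D k) * (rho k)%:R.

Definition gw1 (g : Tg) (j : 'I_(n + r)) : nat := coefj g.1 g.2.1 j.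
Definition gA1 (g : Tg) : {set 'I_p} :=
  [set i : 'I_p | (i : nat)%:R == (g.2.2 : nat)%:R - cst g.1 g.2.1 :> 'F_p].
Definition gw2 (g : Tg) : nat := if g.2.2 then q.-1 else 1%N.
Definition gA2 : {set 'I_q} := [set i : 'I_q | (i : nat) == (p ^ K %% q)%N].

Definition circ : CC2 p q (n + r) :=
  @MkCC2 p q (n + r) #|{: Tg}| (fun j i => gw1 (enum_val j) i)
    (fun j => gA1 (enum_val j)) (fun j => gw2 (enum_val j)) gA2.

Definition Yv (a : {ffun 'I_n -> bool}) (rho : {ffun 'I_r -> bool}) : F :=
  \sum_(i < n | ~~ a i) alpha rho ^+ i.

Definition zvec a (b rho : {ffun 'I_r -> bool}) (k : 'I_K) : 'F_p :=
  match split k with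
  | inl k1 => v2r (Yv a rho) ord0 k1
  | inr k2 => (b k2 : nat)%:R - (rho k2 : nat)%:R end.

Lemma zvec0 a b rho :
  [forall k, zvec a b rho k == 0] = (Yv a rho == 0) && (rho == b).
Proof.
apply/forallP/andP.
  move=> H; split.
    apply/eqP; apply: v2r_inj; rewrite linear0; apply/rowP => k1.
    move: (H (lshift r k1)); rewrite /zvec split_l => /eqP ->.
    by rewrite !mxE.
  apply/eqP/ffunP => k2; move: (H (rshift D k2)); rewrite /zvec split_r.
  rewrite subr_eq0.
  by case: (b k2); case: (rho k2) => //=; rewrite ?mulr1n ?mulr0n ?oner_eq0 // eq_sym oner_eq0.
case=> /eqP Y0 /eqP rb k; rewrite /zvec; case: split => [k1|k2].
  by rewrite Y0 linear0 mxE.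
by rewrite rb subrr.
Qed.

Lemma S_eq a b rho t :
  \sum_j coefj rho t j * (join_inputs a b j : nat)%:R + cst rho t
  = \sum_k t k * zvec a b rho k.
Proof.
rewrite big_split_ord [RHS]big_split_ord /=.
have L1 : \sum_(i < n) coefj rho t (lshift r i) * (join_inputs a b (lshift r i) : nat)%:R
   = \sum_i - ecoef rho t i * (a i : nat)%:R.
  by apply: eq_bigr => i _; rewrite /coefj /join_inputs split_l.
have L2 : \sum_(i < r) coefj rho t (rshift n i) * (join_inputs a b (rshift n i) : nat)%:R
   = \sum_i t (rshift D i) * (b i : nat)%:R.
  by apply: eq_bigr => i _; rewrite /coefj /join_inputs split_r.
have R1 : \sum_(i < D) t (lshift r i) * zvec a b rho (lshift r i)
   = \sum_(k < D) t (lshift r k) * v2r (Yv a rho) ord0 k.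
  by apply: eq_bigr => i _; rewrite /zvec split_l.
have R2 : \sum_(i < r) t (rshift D i) * zvec a b rho (rshift D i)
   = \sum_(k < r) t (rshift D k) * ((b k : nat)%:R - (rho k : nat)%:R).
  by apply: eq_bigr => i _; rewrite /zvec split_r.
rewrite L1 L2 R1 R2.
have e1 : \sum_(k < D) t (lshift r k) * v2r (Yv a rho) ord0 k
    = \sum_(i < n | ~~ a i) ecoef rho t i.
  have vY k : v2r (Yv a rho) ord0 k = \sum_(i < n | ~~ a i) v2r (alpha rho ^+ i) ord0 k.
    by rewrite /Yv raddf_sum summxE.
  rewrite (eq_bigr (fun k => \sum_(i < n | ~~ a i) t (lshift r k) * v2r (alpha rho ^+ i) ord0 k)); last first.
    by move=> k _; rewrite vY mulr_sumr.
  by rewrite exchange_big.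
have e2 : \sum_(i < n | ~~ a i) ecoef rho t i
    = \sum_i ecoef rho t i + \sum_i - ecoef rho t i * (a i : nat)%:R.
  rewrite [\sum_i ecoef rho t i](bigID (fun i => a i)) /= -addrA.
  have -> : \sum_i - ecoef rho t i * (a i : nat)%:R = - \sum_(i | a i) ecoef rho t i.
    rewrite -sumrN [in RHS]big_mkcond; apply: eq_bigr => i _ /=.
    by case: (a i) => /=; rewrite ?mulr1n ?mulr0n ?mulr1 ?mulr0 ?oppr0.
  by rewrite addrC -addrA [X in _ + X]addrC subrr addr0.
rewrite e1 e2.
have e3 : \sum_(k < r) t (rshift D k) * ((b k : nat)%:R - (rho k : nat)%:R)
   = \sum_(k < r) t (rshift D k) * (b k : nat)%:R - \sum_(k < r) t (rshift D k) * (rho k : nat)%:R.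
  by rewrite -sumrB; apply: eq_bigr => k _; rewrite mulrBr.
rewrite e3 /cst.
set A := \sum_i _. set B := \sum_i _. set C := \sum_i _. set E := \sum_i _.
ring.
Qed.


Lemma eval_circ a b : cc_eval circ (join_inputs a b) = (Yv a b == 0).
Proof.
rewrite /cc_eval /=.
have q0 : (0 < q)%N := prime_gt0 pr_q.
have mg s : mod_gate gA2 s = (s %% q == p ^ K %% q)%N.
  apply/existsP/eqP.
    by case=> i /andP[]; rewrite inE => /eqP h1 /eqP h2; rewrite -h2 h1.
  move=> e; exists (Ordinal (ltn_pmod s q0)); by rewrite inE /= e eqxx.
rewrite mg.
have step1 : (\sum_(j < #|{: Tg}|) gw2 (enum_val j) *
      mod_gate (gA1 (enum_val j)) (\sum_i gw1 (enum_val j) i * join_inputs a b i)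
   = \sum_(g : Tg) gw2 g * (\sum_k g.2.1 k * zvec a b g.1 k == (g.2.2 : nat)%:R)%R)%N.
  rewrite (sum_enum_val (fun g => gw2 g * mod_gate (gA1 g) (\sum_i gw1 g i * join_inputs a b i))%N).
  apply: eq_bigr => g _.
  rewrite /gA1 /gw1 affine_gate //; by rewrite eq_sym subr_eq eq_sym S_eq.
rewrite step1.
have step2 : (\sum_(g : Tg) gw2 g * (\sum_k g.2.1 k * zvec a b g.1 k == (g.2.2 : nat)%:R)%R
   = \sum_(rho : {ffun 'I_r -> bool}) \sum_(t : {ffun 'I_K -> 'F_p})
       ((\sum_k t k * zvec a b rho k == 0)%R + q.-1 * (\sum_k t k * zvec a b rho k == 1)%R))%N.
  rewrite sum_pair; apply: eq_bigr => rho _; rewrite sum_pair; apply: eq_bigr => t _.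
  by rewrite big_bool /gw2 /= mulr1n mulr0n mul1n addnC.
rewrite step2 -modn_summ.
rewrite (eq_bigr (fun rho => if (rho == b) && (Yv a b == 0) then (p ^ K %% q)%N else 0%N)); last first.
  move=> rho _; move: (gadget pr_p pr_q (zvec a b rho)) => /=; rewrite zvec0.
  case Hb: (rho == b).
    move/eqP: Hb => ->; rewrite andbT; case: (Yv a b == 0) => [-> | ->] //.
  by rewrite andbF => ->.
rewrite (bigD1 b) //= eqxx big1 ?addn0; last by move=> rho /negbTE ->.
case: (Yv a b == 0); first by rewrite modn_mod eqxx.
rewrite mod0n eq_sym; apply/negbTE.
have -> : (p ^ K %% q == 0)%N = (q %| p ^ K)%N by [].
rewrite Euclid_dvdX // dvdn_prime2 // eq_sym.
by rewrite (negbTE pq).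
Qed.

Lemma pdimF : (p ^ dim F = #|F|)%N.
Proof. by rewrite -dimvf pprimeChar_dimf -card_pprimeChar. Qed.

Lemma circ_size : cc_size circ = (2 ^ r * (p ^ (dim F + r) * 2)).+1%N.
Proof.
rewrite /cc_size /= card_prod card_prod !card_ffun card_bool !card_ord.
by rewrite Fp_cast.
Qed.

Lemma bad_small (a : {ffun 'I_n -> bool}) (i0 : 'I_n) : ~~ a i0 -> (#|[set b | Yv a b == 0%R]| < n)%N.
Proof.
move=> ai0.
pose P : {poly F} := \sum_(i < n | ~~ a i) 'X^i.
have hP b : P.[alpha b] = Yv a b.
  by rewrite /P horner_sum; apply: eq_bigr => i _; rewrite hornerXn.
have P0 : P != 0.
  apply/eqP => /(congr1 (fun Q : {poly F} => Q`_i0)).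
  rewrite coef_sum coef0 (bigD1 i0) //= coefXn eqxx big1 ?addr0.
    by move/eqP; rewrite oner_eq0.
  move=> i /andP[_ ne]; rewrite coefXn.
  have -> : (nat_of_ord i0 == nat_of_ord i) = false by rewrite eq_sym; apply: negbTE.
  by [].
have sP : (size P <= n)%N.
  rewrite /P; apply: (big_ind (fun Q : {poly F} => size Q <= n)%N) => /=.
  - by rewrite size_poly0.
  - move=> Q1 Q2 h1 h2; apply: leq_trans (size_polyD _ _) _.
    by rewrite geq_max h1 h2.
  - by move=> i _; rewrite size_polyXn ltn_ord.
have hr : (#|[set x | root P x]| < size P)%N.
  rewrite cardE; apply: max_poly_roots => //; last exact: enum_uniq.
  by apply/allP => x; rewrite mem_enum inE.
apply: leq_ltn_trans _ (leq_trans hr sP).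
rewrite -(card_imset _ alpha_inj); apply: subset_leq_card.
apply/subsetP => x /imsetP[b]; rewrite !inE => /eqP Yb ->.
by rewrite /root hP Yb.
Qed.

Lemma realizes (big : (3 * n <= 2 ^ r)%N) : prob_realizes circ (@AND_n n).
Proof.
move=> a.
have -> : [set b | cc_eval circ (join_inputs a b) == AND_n a]
        = [set b | (Yv a b == 0) == AND_n a].
  by apply/setP => b; rewrite !inE eval_circ.
rewrite /AND_n; case: (boolP [forall i, a i]) => Ha.
  have Y0 b : Yv a b = 0 by rewrite /Yv big1 // => i; rewrite (forallP Ha i).
  have -> : [set b | (Yv a b == 0) == true] = setT.
    by apply/setP => b; rewrite !inE Y0 eqxx.
  rewrite cardsT card_ffun card_bool card_ord.
  by rewrite leq_mul2r leqnSn orbT.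
move: (Ha); rewrite negb_forall => /existsP[i0 ai0].
try rewrite (negbTE Ha).
have hb := bad_small ai0.
have -> : [set b | (Yv a b == 0) == false] = ~: [set b | Yv a b == 0].
  by apply/setP => b; rewrite !inE eqbF_neg.
have hc := cardsC [set b | Yv a b == 0].
rewrite card_ffun card_bool card_ord in hc.
lia.
Qed.

End Construction.

Lemma AND_pq p q : prime p -> prime q -> p != q -> AND_poly_logrand p q.
Proof.
move=> pr_p pr_q pq.
have p1 : (1 < p)%N := prime_gt1 pr_p.
exists (16 * p ^ 6 + 1)%N, (1 + 2 * p)%N => n.
have h2tl : (2 ^ trunc_log 2 n <= n.+1)%N.
  case: (posnP n) => [-> | n0]; first by [].
  by apply: leq_trans (trunc_logP (isT : (1 < 2)%N) n0) _.
have hn : (n < 2 ^ (trunc_log 2 n).+1)%N := trunc_log_ltn n (isT : (1 < 2)%N).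
set tl := trunc_log 2 n.
set r := tl.+3.
have r0 : (0 < r)%N by [].
have [F0 pcharF cardF] := pPrimePowerField pr_p r0.
have cF : #|pPrimeCharType pcharF| = (p ^ r)%N := cardF.
have le : (#|{: {ffun 'I_r -> bool}}| <= #|pPrimeCharType pcharF|)%N.
  by rewrite card_ffun card_bool card_ord cF leq_exp2r.
pose alpha (b : {ffun 'I_r -> bool}) : pPrimeCharType pcharF :=
  enum_val (widen_ord le (enum_rank b)).
have alpha_inj : injective alpha.
  move=> b1 b2 /enum_val_inj /(congr1 val) /= /val_inj.
  exact: enum_rank_inj.
have mono (e a b' : nat) : (a <= b')%N -> (a ^ e <= b' ^ e)%N.
  by move=> h; elim: e => // e IH; rewrite !expnS leq_mul.
have hp2 : (p <= 2 ^ p)%N := ltnW (ltn_expl p (isT : (1 < 2)%N)).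
have hptl : (p ^ tl <= n.+1 ^ p)%N.
  apply: (@leq_trans ((2 ^ p) ^ tl)); first exact: mono.
  rewrite expnAC; exact: mono.
have pdim : (p ^ dim (pPrimeCharType pcharF) = p ^ r)%N by rewrite pdimF.
exists r, (circ q n alpha); split.
- rewrite (circ_size q pr_p) expnD pdim.
  have e1 : (2 ^ r = 8 * 2 ^ tl)%N by rewrite /r !expnS; lia.
  have e2 : (p ^ r = p ^ 3 * p ^ tl)%N by rewrite -expnD; congr (p ^ _); rewrite /r; lia.
  have e3 : (n.+1 ^ (1 + 2 * p) = n.+1 * (n.+1 ^ p * n.+1 ^ p))%N.
    by rewrite expnD expn1 mul2n -addnn expnD.
  have e4 : (p ^ 6 = p ^ 3 * p ^ 3)%N by rewrite -expnD.
  rewrite e1 e2 e3 e4.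
  set X := (2 ^ tl)%N in h2tl *. set Y := (p ^ tl)%N in hptl *.
  set Z := (n.+1 ^ p)%N in hptl *. set P3 := (p ^ 3)%N.
  have hXY : (X * (Y * Y) <= n.+1 * (Z * Z))%N.
    by apply: leq_mul => //; apply: leq_mul.
  have : (16 * (P3 * P3) * (X * (Y * Y)) <= 16 * (P3 * P3) * (n.+1 * (Z * Z)))%N.
    by apply: leq_mul.
  have : (0 < n.+1 * (Z * Z))%N by rewrite !muln_gt0 /Z expn_gt0.
  have -> : (8 * X * (P3 * Y * (P3 * Y) * 2) = 16 * (P3 * P3) * (X * (Y * Y)))%N by ring.
  set W := (16 * (P3 * P3))%N. set A := (X * (Y * Y))%N. set B := (n.+1 * (Z * Z))%N.
  move=> h0 h1; rewrite mulnDl mul1n; apply: leq_ltn_trans h1 _.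
  by rewrite -{1}[(W * B)%N]addn0 ltn_add2l.
- rewrite /r; have : (0 < p ^ 6)%N by rewrite expn_gt0 prime_gt0.
  set x := (p ^ 6)%N; nia.
- apply: (realizes pr_p pr_q pq alpha_inj).
  rewrite /r expnS expnS; move: hn; rewrite expnS; lia.
Qed.

Lemma liftA_gate (m p d : nat) (A : {set 'I_p}) (k : nat) :
  m = (d * p)%N -> (0 < d)%N -> (0 < p)%N ->
  mod_gate [set i : 'I_m | [exists j in A, (i : nat) == (d * j)%N]] (d * k)
  = mod_gate A k.
Proof.
move=> -> d0 p0; rewrite /mod_gate -muln_modr.
apply/existsP/existsP.
  case=> i /andP[]; rewrite inE => /existsP[j /andP[jA /eqP ij]] ik.
  exists j; rewrite jA /=.
  by rewrite ij eqn_pmul2l // in ik.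
case=> j /andP[jA /eqP jk].
have lt : (d * j < d * p)%N by rewrite ltn_pmul2l.
exists (Ordinal lt); rewrite inE /= jk eqxx andbT.
by apply/existsP; exists j; rewrite jA -jk eqxx.
Qed.

Lemma AND_lift m p q : (0 < m)%N -> prime p -> prime q -> (p %| m)%N -> (q %| m)%N ->
  AND_poly_logrand p q -> AND_poly_logrand m m.
Proof.
move=> m0 pr_p pr_q pm qm [C [k H]]; exists C, k => n.
have [r [G [s1 s2 s3]]] := H n.
set d1 := (m %/ p)%N; set d2 := (m %/ q)%N.
have e1 : m = (d1 * p)%N by rewrite divnK.
have e2 : m = (d2 * q)%N by rewrite divnK.
have d10 : (0 < d1)%N by rewrite divn_gt0 ?prime_gt0 // dvdn_leq.
have d20 : (0 < d2)%N by rewrite divn_gt0 ?prime_gt0 // dvdn_leq.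
pose G' := @MkCC2 m m (n + r) (cc_s G) (fun j i => d1 * cc_w1 G j i)%N
  (fun j => [set i : 'I_m | [exists l in cc_A1 G j, (i : nat) == (d1 * l)%N]])
  (fun j => d2 * cc_w2 G j)%N
  [set i : 'I_m | [exists l in cc_A2 G, (i : nat) == (d2 * l)%N]].
have ev x : cc_eval G' x = cc_eval G x.
  rewrite /cc_eval /=.
  rewrite (eq_bigr (fun j => d2 * (cc_w2 G j * mod_gate (cc_A1 G j) (\sum_(i < n + r) cc_w1 G j i * x i)))%N); last first.
    move=> j _; rewrite -mulnA; congr (_ * (_ * _))%N.
    rewrite (eq_bigr (fun i => d1 * (cc_w1 G j i * x i)))%N; last by move=> i _; rewrite mulnA.
    by rewrite -big_distrr /= liftA_gate // prime_gt0.
  by rewrite -big_distrr /= liftA_gate // prime_gt0.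
exists r, G'; split => //.
move=> a; have := s3 a.
have -> : [set b | cc_eval G' (join_inputs a b) == AND_n a]
        = [set b | cc_eval G (join_inputs a b) == AND_n a].
  by apply/setP => b; rewrite !inE ev.
by [].
Qed.

Theorem theorem1p3 :
  (forall m : nat, 0 < m -> 2 <= size (primes m) -> AND_poly_logrand m m) /\
  (forall p q : nat, prime p -> prime q -> p != q -> AND_poly_logrand p q).
Proof.
split; last exact: AND_pq.
move=> m m0 hs.
set s := primes m.
have h0 : (0 < size s)%N by apply: leq_trans hs.
have h1 : (1 < size s)%N by [].
have := mem_nth 0 h0; have := mem_nth 0 h1.
rewrite !mem_primes => /and3P[pq _ qm] /and3P[pp _ pm].
apply: (AND_lift m0 pp pq pm qm); apply: AND_pq => //.
by rewrite nth_uniq // primes_uniq.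
Qed.
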